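(* Let $L$ be a Lelek fan and let $C\subseteq L$ be a subcontinuum of $L$ that is a Cantor fan. Then $C$ is nowhere dense in $L$, i.e. $\mathrm{Int}_L(\mathrm{Cl}_L(C))=\emptyset$.
   Context: A continuum is a nonempty compact connected metric space. A dendroid is an arcwise connected, hereditarily unicoherent continuum. A point $x$ of a dendroid $X$ is a ramification point if $x$ is the top (the branch point) of some simple triod in $X$. A fan is a dendroid with at most one ramification point; this point, if it exists, is called the top of the fan. For a fan $X$, a point $x$ is an end point of $X$ if $x$ is an end point of every arc in $X$ containing $x$; $E(X)$ denotes the set of end points of $X$. A fan $X$ with top $v$ is smooth if for every $x\in X$ and every sequence $x_n\to x$ in $X$, the arcs from $v$ to $x_n$ converge (in the Hausdorff metric) to the arc from $v$ to $x$. A Lelek fan is a smooth fan $X$ with $\mathrm{Cl}(E(X))=X$. A Cantor fan is a continuum homeomorphic to $\bigcup_{c\in C}A_c\subseteq\mathbb R^2$, where $C\subseteq[0,1]$ is the Cantor middle-third set and $A_c$ is the straight segment from $(\tfrac12,0)$ to $(c,1)$. *)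

(* Defs.v *)
From HB Require Import structures.
From mathcomp Require Import all_boot all_order all_algebra.
From mathcomp Require Import all_classical all_reals all_analysis.
Set Implicit Arguments. Unset Strict Implicit. Unset Printing Implicit Defensive.
Import Order.TTheory GRing.Theory Num.Theory.
Import numFieldTopology.Exports.
Local Open Scope classical_set_scope.
Local Open Scope ring_scope.

Section Fans.
Context {R : realType}.

Definition homeomorphic_sets {U V : topologicalType} (A : set U) (B : set V) :=
  exists (f : U -> V) (g : V -> U),
    {within A, continuous f} /\ {within B, continuous g} /\
    (forall x, A x -> B (f x) /\ g (f x) = x) /\
    (forall y, B y -> A (g y) /\ f (g y) = y).

Context {T : metricType R}.

Definition continuum (X : set T) := X !=set0 /\ compact X /\ connected X.

Definition arc_between (A : set T) (a b : T) :=
  exists (f : R -> T) (g : T -> R),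
    {within `[0, 1]%classic, continuous f} /\ {within A, continuous g} /\
    (forall t, `[0, 1]%classic t -> A (f t) /\ g (f t) = t) /\
    (forall y, A y -> `[0, 1]%classic (g y) /\ f (g y) = y) /\
    f 0 = a /\ f 1 = b.

Definition is_arc (A : set T) := exists a b, arc_between A a b.

Definition arc_endpoint (A : set T) (x : T) := exists y, arc_between A x y.

Definition arcwise_connected (X : set T) :=
  forall x y, X x -> X y -> x <> y -> exists A, A `<=` X /\ arc_between A x y.

Definition hereditarily_unicoherent (X : set T) :=
  forall A B, A `<=` X -> B `<=` X -> continuum A -> continuum B ->
    connected (A `&` B).

Definition dendroid (X : set T) :=
  continuum X /\ arcwise_connected X /\ hereditarily_unicoherent X.

Definition ramification_point (X : set T) (v : T) :=
  exists (A1 A2 A3 : set T) (a1 a2 a3 : T),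
    [/\ A1 `<=` X, A2 `<=` X & A3 `<=` X] /\
    [/\ arc_between A1 v a1, arc_between A2 v a2 & arc_between A3 v a3] /\
    [/\ A1 `&` A2 = [set v], A1 `&` A3 = [set v] & A2 `&` A3 = [set v]].

Definition fan (X : set T) :=
  dendroid X /\
  (forall x y, ramification_point X x -> ramification_point X y -> x = y).

Definition end_points (X : set T) : set T :=
  [set x | X x /\ forall A, A `<=` X -> is_arc A -> A x -> arc_endpoint A x].

Definition segment (X : set T) (v x : T) (S : set T) :=
  S `<=` X /\ (if pselect (x = v) then S = [set v] else arc_between S v x).

Definition hausdorff_cvg (S : nat -> set T) (K : set T) :=
  forall e : R, 0 < e -> \forall n \near \oo,
    (forall y, S n y -> exists2 x, K x & ball x e y) /\
    (forall x, K x -> exists2 y, S n y & ball x e y).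

Definition smooth_fan (X : set T) (v : T) :=
  fan X /\ ramification_point X v /\
  forall (x : T) (u : nat -> T) (Su : nat -> set T) (Sx : set T),
    X x -> (forall n, X (u n)) -> u @ \oo --> x ->
    (forall n, segment X v (u n) (Su n)) -> segment X v x Sx ->
    hausdorff_cvg Su Sx.

Definition lelek_fan (X : set T) :=
  (exists v, smooth_fan X v) /\ closure (end_points X) = X.

End Fans.

Fixpoint cantor_approx {R : realType} (n : nat) : set R :=
  match n with
  | 0 => `[0, 1]%classic
  | m.+1 => ((fun x : R => x / 3) @` cantor_approx m) `|`
            ((fun x : R => (2 + x) / 3) @` cantor_approx m)
  end.

Definition cantor_middle_third {R : realType} : set R :=
  \bigcap_(n in [set: nat]) cantor_approx n.

(* The Cantor fan: union of segments from (1/2, 0) to (c, 1), c in C. *)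
Definition cantor_fan_model {R : realType} : set (R * R)%type :=
  [set p | exists c t : R, cantor_middle_third c /\ 0 <= t <= 1 /\
     p = ((1 - t) * 2^-1 + t * c, t)].

Definition cantor_fan {R : realType} {T : metricType R} (X : set T) :=
  homeomorphic_sets X (@cantor_fan_model R).

(* Main.v *)
Require Import Defs.
From HB Require Import structures.
From mathcomp Require Import all_boot all_order all_algebra.
From mathcomp Require Import all_classical all_reals all_analysis.
Import Order.TTheory GRing.Theory Num.Theory.
Import numFieldTopology.Exports.
From mathcomp Require Import lra.
Local Open Scope classical_set_scope.
Local Open Scope ring_scope.

Lemma wcomp {U V W : topologicalType} (A : set U) (B : set V) (f : U -> V) (g : V -> W) :
  {within A, continuous f} -> {within B, continuous g} ->
  (forall x, A x -> B (f x)) -> {within A, continuous (g \o f)}.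
Proof.
move=> hf hg AB; apply/subspace_continuousP => x Ax.
have cf := (@subspace_continuousP _ A _ f).1 hf x Ax.
have cg := (@subspace_continuousP _ B _ g).1 hg (f x) (AB x Ax).
move=> P /cg /= hP.
have := cf _ hP.
rewrite !nbhs_simpl /= => H.
have HA : within A (nbhs x) A by exact: withinT.
apply: (filterS2 _ _ HA H) => y Ay /= Hy; exact: Hy (AB _ Ay).
Qed.
Arguments wcomp {U V W A B f g}.
Lemma sub01 (R : realType) (a b : R) : 0 <= a -> b <= 1 ->
  `[a, b]%classic `<=` `[0, 1]%classic.
Proof.
move=> a0 b1 z /=; rewrite !in_itv /= => /andP[az zb].
by rewrite (le_trans a0 az) (le_trans zb b1).
Qed.

Lemma no_bij (R : realType) (phi : R -> R) :
  {within `[0, 1]%classic, continuous phi} ->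
  (forall a b, `[0, 1]%classic a -> `[0, 1]%classic b -> phi a = phi b -> a = b) ->
  (forall r, `[0, 1]%classic r -> exists2 s, `[0, 1]%classic s & phi s = r) ->
  0 < phi 0 < 1 -> False.
Proof.
move=> cphi inj sur /andP[p0 p1].
have I0 : `[0, 1]%classic (0:R) by rewrite /= in_itv /= lexx ler01.
have I1 : `[0, 1]%classic (1:R) by rewrite /= in_itv /= lexx ler01.
have [a Ia pa] := sur 0 I0.
have [b Ib pb] := sur 1 I1.
move: (Ia) (Ib); rewrite /= !in_itv /= => /andP[a0 a1] /andP[b0 b1].
have an0 : a != 0 by apply/eqP => a0'; move: p0; rewrite a0' in pa; rewrite pa ltxx.
have bn0 : b != 0 by apply/eqP => b0'; move: p1; rewrite b0' in pb; rewrite pb ltxx.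
have [ab|ba] := leP a b.
- have := @IVT R phi a b (phi 0) ab (continuous_subspaceW (@sub01 R a b a0 b1) cphi).
  rewrite pa pb => H.
  have [c cI pc] : exists2 c : R, c \in `[a, b] & phi c = phi 0.
    by apply: H; rewrite min_l ?max_r ?ler01 // (ltW p0) (ltW p1).
  have cI' : `[0, 1]%classic c by apply: (@sub01 R a b a0 b1).
  have c0 := inj _ _ cI' I0 pc.
  move: cI; rewrite in_itv /= c0 => /andP[a0' _].
  by move: an0; rewrite eq_le a0' a0.
- have := @IVT R phi b a (phi 0) (ltW ba) (continuous_subspaceW (@sub01 R b a b0 a1) cphi).
  rewrite pa pb => H.
  have [c cI pc] : exists2 c : R, c \in `[b, a] & phi c = phi 0.
    by apply: H; rewrite min_r ?max_l ?ler01 // (ltW p0) (ltW p1).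
  have cI' : `[0, 1]%classic c by apply: (@sub01 R b a b0 a1).
  have c0 := inj _ _ cI' I0 pc.
  move: cI; rewrite in_itv /= c0 => /andP[b0' _].
  by move: bn0; rewrite eq_le b0' b0.
Qed.
Lemma sig_cont (R : realType) (c : R) : continuous (fun s : R => ((1 - s) * 2^-1 + s * c, s)).
Proof.
move=> s Q /= [[P1 P2] /= [h1 h2] hQ].
have c1 : continuous (fun s : R => (1 - s) * 2^-1 + s * c).
  move=> t; apply: cvgD; [apply: cvgMl; apply: cvgB => //; exact: cvg_cst|apply: cvgMl => //].
have := c1 s _ h1; rewrite nbhs_simpl /= => H1.
apply: filterS2 H1 h2 => y H1 H2; exact: hQ.
Qed.
Lemma snd_cont (R : realType) : continuous (fun z : R * R => z.2).
Proof. by move=> z; apply: cvg_snd. Qed.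

Theorem mainTheorem2 (R : realType) (T : metricType R) (C : set T) :
  lelek_fan (setT : set T) -> continuum C -> cantor_fan C ->
  interior (closure C) = set0.
Proof.
move=> [_ EL] [_ [cC _]] [h [g [ch [cg [hg gh]]]]].
have clC : closed C := compact_closed (@metric_hausdorff R T) cC.
have <- : C = closure C by apply/closure_id.
apply/seteqP; split => // p Hp; exfalso.
pose sig (c s : R) := ((1 - s) * 2^-1 + s * c, s).
have Cp : C p := interior_subset Hp.
have [c [t [cc [t01 hpE]]]] := (hg p Cp).1.
have [s [s01 Is]] : exists s, (0 < s < 1) /\ interior C (g (sig c s)).
  have Hg := (@subspace_continuousP _ (@cantor_fan_model R) _ g).1 cg (h p) (hg p Cp).1.
  have nI : nbhs (g (h p)) (interior C) by rewrite (hg p Cp).2; apply: open_nbhs_nbhs; split => //; exact: open_interior.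
  have := Hg _ nI; rewrite nbhs_simpl /= hpE => H1.
  have H2 : nbhs (sig c t) [set y | cantor_fan_model y -> C° (g y)] by exact: H1.
  have := @sig_cont R c t _ H2; rewrite nbhs_simpl /= => H3.
  have [e e0 He] := (nbhs_ballP _ _).1 H3.
  have hm1 : Num.min e 2^-1 <= e by rewrite ge_min lexx.
  have hm2 : Num.min e 2^-1 <= 2^-1 by rewrite ge_min lexx orbT.
  have hm3 : 0 < Num.min e 2^-1 by rewrite lt_min e0 /= invr_gt0 ltr0n.
  move: t01 => /andP[t0 t1].
  have [s [s01 sb]] : exists s, (0 < s < 1) /\ ball t e s.
    have [tle|tgt] := leP t 2^-1.
    - exists (t + Num.min e 2^-1 / 2); rewrite /ball /=.
      split; first by apply/andP; split; lra.
      rewrite ltr_norml; apply/andP; split; lra.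
    - exists (t - Num.min e 2^-1 / 2); rewrite /ball /=.
      split; first by apply/andP; split; lra.
      rewrite ltr_norml; apply/andP; split; lra.
  exists s; split => //; apply: He sb _.
  exists c, s; split => //; split => //.
  by move: s01 => /andP[? ?]; apply/andP; split; apply: ltW.
have ms : cantor_fan_model (sig c s).
  exists c, s; split => //; split => //.
  by move: s01 => /andP[? ?]; apply/andP; split; apply: ltW.
have [Cx0 hx0] := gh _ ms.
set x0 := g (sig c s) in Is Cx0 hx0.
have NV : nbhs x0 [set y | C° y /\ 0 < (h y).2 < 1].
  have Hh := (@subspace_continuousP _ C _ h).1 ch x0 Cx0.
  have N1 : nbhs s [set z : R | z \in `]0, 1[].
    by apply: (@near_in_itvoo R 0 1 s); rewrite in_itv /=.
  have N2 : nbhs (h x0) [set z : R * R | z.2 \in `]0, 1[].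
    by rewrite hx0; apply: (@snd_cont R (sig c s) _ N1).
  have N3 := Hh _ N2; rewrite nbhs_simpl /= in N3.
  have N4 : nbhs x0 C° by apply: open_nbhs_nbhs; split => //; exact: open_interior.
  apply: filterS2 N4 N3 => y Iy Hy; split => //.
  by have := Hy (interior_subset Iy); rewrite /= in_itv.
have : closure (end_points [set: T]) x0 by rewrite EL.
move=> /(_ _ NV) [e [Ee [Ie e01]]].
have Ce := interior_subset Ie.
have [[c' [u [cc' [u01 heE]]]] ghe] := hg e Ce.
pose f := fun r : R => g (sig c' r).
have mod r : `[0, 1]%classic r -> cantor_fan_model (sig c' r).
  by move=> Ir; exists c', r; split => //; split => //; move: Ir; rewrite /= in_itv.
pose A := f @` `[0, 1]%classic.
have AC : A `<=` C by move=> y [r Ir <-]; exact: (gh _ (mod r Ir)).1.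
have hf r : `[0, 1]%classic r -> (h (f r)).2 = r.
  by move=> Ir; rewrite /f (gh _ (mod r Ir)).2.
have fh y : A y -> `[0, 1]%classic ((h y).2) /\ f ((h y).2) = y.
  by move=> [r Ir <-]; rewrite hf.
have cG : {within A, continuous (fun y => (h y).2)}.
  have := wcomp (B := setT) (continuous_subspaceW AC ch) (continuous_subspaceT (A:=setT) (@snd_cont R)).
  by apply.
have cf : {within `[0, 1]%classic, continuous f}.
  exact: (wcomp (continuous_subspaceT (@sig_cont R c')) cg mod).
have arcA : is_arc A.
  exists (f 0), (f 1), f, (fun y => (h y).2); split => //; split => //.
  split; first by move=> r Ir; split; [exists r|rewrite hf].
  by split.
have Ae : A e.
  exists u; first by rewrite /= in_itv.
  by rewrite /f /sig -heE ghe.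
have [y [f' [g' [cf' [cg' [p1 [p2 [f'0 _]]]]]]]] := Ee.2 A (fun _ _ => I) arcA Ae.
apply: (@no_bij R (fun r => (h (f' r)).2)).
- exact: (wcomp cf' cG (fun r Ir => (p1 r Ir).1)).
- move=> a b Ia Ib hab.
  have Ea := (fh _ (p1 a Ia).1).2; have Eb := (fh _ (p1 b Ib).1).2.
  rewrite hab Eb in Ea.
  by rewrite -(p1 a Ia).2 -(p1 b Ib).2 Ea.
- move=> r Ir.
  have Ar : A (f r) by exists r.
  exists (g' (f r)); first exact: (p2 _ Ar).1.
  by rewrite (p2 _ Ar).2 hf.
- by rewrite f'0.
Qed.
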